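(* Let $\rho>0$ and let $y\in\mathbb{R}^n$ satisfy $y_1\ge y_2\ge\cdots\ge y_n$. Then \[ S_\rho(y)=\Pi_{\mathcal D}(y-\rho w), \] where $w\in\mathbb{R}^n$ is given by $w_k=n-2k+1$, $k=1,\dots,n$.
   Context: For $\rho>0$ and $y\in\mathbb{R}^n$, $S_\rho(y):=\operatorname{argmin}_{x\in\mathbb{R}^n}\big\{\tfrac12\|x-y\|^2+\rho\sum_{1\le i<j\le n}|x_i-x_j|\big\}$ (unique minimizer). $\mathcal D:=\{x\in\mathbb{R}^n : x_1\ge x_2\ge\cdots\ge x_n\}$, and $\Pi_{\mathcal D}$ denotes the Euclidean (metric) projection onto $\mathcal D$. *)

(* Defs.v *)
From HB Require Import structures.
From mathcomp Require Import all_boot all_order all_algebra.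
Set Implicit Arguments. Unset Strict Implicit. Unset Printing Implicit Defensive.
Import Order.TTheory GRing.Theory Num.Theory.
Local Open Scope ring_scope.

Section Defs.
Variables (R : realFieldType) (n : nat).

Definition sqnorm (x : 'rV[R]_n) : R := \sum_(i < n) (x ord0 i) ^+ 2.

Definition prox_obj (rho : R) (y x : 'rV[R]_n) : R :=
  sqnorm (x - y) / 2%:R
  + rho * \sum_(i < n) \sum_(j < n | (i < j)%N) `|x ord0 i - x ord0 j|.

Definition is_S (rho : R) (y x : 'rV[R]_n) : Prop :=
  forall z : 'rV[R]_n, prox_obj rho y x <= prox_obj rho y z.

Definition inD (x : 'rV[R]_n) : Prop :=
  forall i j : 'I_n, (i <= j)%N -> x ord0 j <= x ord0 i.

Definition is_proj_D (v x : 'rV[R]_n) : Prop :=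
  inD x /\ forall z : 'rV[R]_n, inD z -> sqnorm (x - v) <= sqnorm (z - v).

(* w_k = n - 2k + 1 for k = 1..n; 0-based index i corresponds to k = i+1 *)
Definition wvec : 'rV[R]_n :=
  \row_(i < n) (n%:R - 2%:R * (i.+1)%:R + 1).

End Defs.

(* Main.v *)
Require Import Defs.
From HB Require Import structures.
From mathcomp Require Import all_boot all_order all_algebra.
From mathcomp Require Import fingroup perm ring lra.
Import Order.TTheory GRing.Theory Num.Theory.
Local Open Scope ring_scope.

Lemma sum_pairs (R : realFieldType) (f : nat -> R) m :
  \sum_(i < m) \sum_(j < m | (i < j)%N) (f i - f j) =
  \sum_(k < m) (m%:R - 2%:R * (k.+1)%:R + 1) * f k.
Proof.
elim: m => [|m IH]; first by rewrite !big_ord0.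
have H0 : \sum_(j < m.+1 | (m < j)%N) (f m - f j) = 0.
  by apply: big_pred0 => j; rewrite ltnNge -ltnS ltn_ord.
rewrite big_ord_recr /= H0 addr0.

rewrite (eq_bigr (fun i : 'I_m => \sum_(j < m | (i < j)%N) (f i - f j) + (f i - f m))); last first.
  by move=> i _; rewrite big_mkcond big_ord_recr /= ltn_ord -big_mkcond.
rewrite big_split /= IH.
rewrite [in RHS]big_ord_recr /=.
rewrite [in RHS](eq_bigr (fun k : 'I_m => (m%:R - 2%:R * (k.+1)%:R + 1) * f k + f k)); last first.
  by move=> k _; rewrite -[m.+1]addn1 natrD; ring.
rewrite [in RHS]big_split /= sumrB.
have -> : \sum_(i < m) f m = m%:R * f m by rewrite sumr_const card_ord mulr_natl.
rewrite -[m.+1]addn1 !natrD; ring.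
Qed.

Section Proof.
Variables (R : realFieldType) (n : nat).
Implicit Types (u z x y : 'rV[R]_n).

Definition pen u := \sum_(i < n) \sum_(j < n | (i < j)%N) `|u ord0 i - u ord0 j|.
Definition prow (s : 'S_n) u : 'rV[R]_n := \row_k u ord0 (s k).

Lemma sum_tperm (i j : 'I_n) (h : 'I_n -> 'I_n -> R) : i != j ->
  \sum_k h k (tperm i j k) = \sum_k h k k + (h i j + h j i - h i i - h j j).
Proof.
move=> nij.
rewrite (bigD1 i) //= (bigD1 j) 1?eq_sym //= [in RHS](bigD1 i) //= [in RHS](bigD1 j) 1?eq_sym //=.
rewrite tpermL tpermR.
rewrite (eq_bigr (fun k => h k k)); last first.
  by move=> k /andP[ki kj]; rewrite tpermD // eq_sym.
lra.
Qed.

Lemma pen_full u : pen u *+ 2 = \sum_(i < n) \sum_(j < n) `|u ord0 i - u ord0 j|.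
Proof.
have -> : \sum_(i < n) \sum_(j < n) `|u ord0 i - u ord0 j| =
  \sum_(i < n) \sum_(j < n) ((if (i < j)%N then `|u ord0 i - u ord0 j| else 0) +
                 (if (j < i)%N then `|u ord0 j - u ord0 i| else 0)).
  apply: eq_bigr => i _; apply: eq_bigr => j _.
  case: (ltngtP i j) => [h|h|h].
  - by rewrite addr0.
  - by rewrite add0r distrC.
  - have -> : i = j by apply: val_inj.
    by rewrite subrr normr0 addr0.
rewrite mulr2n.
rewrite (eq_bigr (fun i : 'I_n => \sum_(j < n) (if (i < j)%N then `|u ord0 i - u ord0 j| else 0) +
   \sum_(j < n) (if (j < i)%N then `|u ord0 j - u ord0 i| else 0))); last first.
  by move=> i _; rewrite big_split.
rewrite big_split /=; congr (_ + _).
  by rewrite /pen; apply: eq_bigr => i _; rewrite big_mkcond.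
rewrite exchange_big /pen; apply: eq_bigr => i _; rewrite big_mkcond //.
Qed.

Lemma pen_perm (s : 'S_n) u : pen (prow s u) = pen u.
Proof.
have H : pen (prow s u) *+ 2 = pen u *+ 2.
  rewrite !pen_full [in RHS](reindex_inj (@perm_inj _ s)) /=.
  apply: eq_bigr => i _; rewrite [in RHS](reindex_inj (@perm_inj _ s)) /=.
  by apply: eq_bigr => j _; rewrite !mxE.
move: H; rewrite !mulr2n => H; lra.
Qed.

Definition lin (u : 'rV[R]_n) := \sum_(k < n) wvec R n ord0 k * u ord0 k.
Lemma pen_D u : inD u -> pen u = lin u.
Proof.
move=> Du.
pose f k := if (insub k : option 'I_n) is Some l then u ord0 l else 0.
have fE (i : 'I_n) : f i = u ord0 i by rewrite /f valK.
rewrite /pen (eq_bigr (fun i : 'I_n => \sum_(j < n | (i < j)%N) (f i - f j))); last first.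
  move=> i _; apply: eq_bigr => j ij; rewrite !fE ger0_norm // subr_ge0.
  by apply: Du; apply: ltnW.
rewrite sum_pairs /lin; apply: eq_bigr => k _; by rewrite mxE fE.
Qed.

Lemma Fdef rho y u : prox_obj rho y u = sqnorm (u - y) / 2%:R + rho * pen u.
Proof. by []. Qed.

Lemma sq_swap (i j : 'I_n) u y : i != j ->
  sqnorm (prow (tperm i j) u - y) =
  sqnorm (u - y) + 2%:R * ((u ord0 j - u ord0 i) * (y ord0 j - y ord0 i)).
Proof.
move=> nij; rewrite /sqnorm.
have := sum_tperm i j (fun k l => (u ord0 l - y ord0 k) ^+ 2) nij.
rewrite (eq_bigr (fun k => (prow (tperm i j) u - y) ord0 k ^+ 2)); last first.
  by move=> k _; rewrite !mxE.
move=> ->.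
rewrite (eq_bigr (fun k => (u - y) ord0 k ^+ 2)); last by move=> k _; rewrite !mxE.
congr (_ + _); ring.
Qed.

Lemma F_swap rho (i j : 'I_n) u y : i != j ->
  (u ord0 j - u ord0 i) * (y ord0 j - y ord0 i) <= 0 ->
  prox_obj rho y (prow (tperm i j) u) <= prox_obj rho y u.
Proof.
move=> nij h; rewrite !Fdef pen_perm sq_swap //.
have h2 : (0:R) < 2%:R by [].
set a := (u ord0 j - u ord0 i) * (y ord0 j - y ord0 i) in h *.
rewrite lerD2r ler_pM2r ?invr_gt0 //; lra.
Qed.

Lemma sq_mid a b y : sqnorm ((2%:R)^-1 *: (a + b) - y) =
  (sqnorm (a - y) + sqnorm (b - y)) / 2%:R - sqnorm (a - b) / 4%:R.
Proof.
rewrite /sqnorm mulrDl !mulr_suml -big_split -sumrB /=; apply: eq_bigr => k _.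
rewrite !mxE; field; by rewrite ?pnatr_eq0.
Qed.

Lemma sq_term u i : (u ord0 i) ^+ 2 <= sqnorm u.
Proof.
rewrite /sqnorm (bigD1 i) //= lerDl; apply: sumr_ge0 => k _; exact: sqr_ge0.
Qed.

Lemma pen_mid a b : pen ((2%:R)^-1 *: (a + b)) <= (pen a + pen b) / 2%:R.
Proof.
apply: (@le_trans _ _ (\sum_(i < n) \sum_(j < n | (i < j)%N)
   (`|a ord0 i - a ord0 j| / 2%:R + `|b ord0 i - b ord0 j| / 2%:R))).
  apply: ler_sum => i _; apply: ler_sum => j _.
  rewrite !mxE.
  have -> : 2%:R^-1 * (a ord0 i + b ord0 i) - 2%:R^-1 * (a ord0 j + b ord0 j) =
     ((a ord0 i - a ord0 j) + (b ord0 i - b ord0 j)) * 2%:R^-1 by ring.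
  rewrite normrM (ger0_norm (_ : 0 <= 2%:R^-1)) ?invr_ge0 //.
  have := ler_normD (a ord0 i - a ord0 j) (b ord0 i - b ord0 j).
  have h2 : (0:R) < 2%:R^-1 by rewrite invr_gt0.
  set p := `|_ + _|; set q := `|a ord0 i - _|; set r := `|b ord0 i - _|.
  move=> h; rewrite -mulrDl; rewrite ler_pM2r //.
rewrite le_eqVlt; apply/orP; left; apply/eqP.
rewrite /pen mulrDl !mulr_suml -big_split /=; apply: eq_bigr => i _.
rewrite !mulr_suml -big_split //.
Qed.

Lemma min_inD rho y x : 0 <= rho -> inD y -> is_S rho y x -> inD x.
Proof.
move=> rho0 Dy Hx i j ij; rewrite leNgt; apply/negP => lt.
have nij : i != j by apply: contraTneq lt => ->; rewrite ltxx.
have lij : (i < j)%N by rewrite ltn_neqAle ij andbT; apply: contra nij => /eqP h; apply/eqP/val_inj.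
set x' := prow (tperm i j) x.
have Fx' : prox_obj rho y x' <= prox_obj rho y x.
  apply: F_swap => //; have hA : 0 <= x ord0 j - x ord0 i by rewrite subr_ge0 ltW.
  have hB : y ord0 j - y ord0 i <= 0 by rewrite subr_le0; apply: Dy; exact: ltnW.
  exact: mulr_ge0_le0.
set m := (2%:R)^-1 *: (x + x').
have := Hx m; rewrite !Fdef sq_mid.
have hd : 0 < sqnorm (x - x').
  apply: lt_le_trans (sq_term _ i); rewrite !mxE tpermL.
  have h : 0 < x ord0 j - x ord0 i by rewrite subr_gt0.
  nra.
have hp : rho * pen m <= rho * ((pen x + pen x') / 2%:R) by rewrite ler_wpM2l // pen_mid.
rewrite /x' in hd hp Fx'.
move: hp Fx'; rewrite !Fdef /x' pen_perm => hp hF h; nra.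
Qed.

Lemma sort_ex rho y z : 0 <= rho -> inD y ->
  exists z', inD z' /\ prox_obj rho y z' <= prox_obj rho y z.
Proof.
move=> rho0 Dy.
pose Fz (s : 'S_n) := prox_obj rho y (prow s z).
have [s0 _ Hs0] := @arg_minP _ _ _ 1%g xpredT Fz isT.
pose Ps := fun s => Fz s == Fz s0.
pose Psi (s : 'S_n) := \sum_(k < n) (- (k : nat)%:R) * (prow s z) ord0 k.
have [s1 /eqP Ps1 Hs1] := @arg_maxP _ _ _ s0 Ps Psi (eqxx _).
exists (prow s1 z); split; last first.
  have -> : prox_obj rho y z = Fz 1%g by rewrite /Fz /prow; congr prox_obj; apply/rowP => k; rewrite !mxE perm1.
  by rewrite -/(Fz s1) Ps1; apply: Hs0.
move=> i j ij; rewrite leNgt; apply/negP => lt.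
have nij : i != j by apply: contraTneq lt => ->; rewrite ltxx.
have lij : (i < j)%N by rewrite ltn_neqAle ij andbT; apply: contra nij => /eqP h; apply/eqP/val_inj.
set s2 := (tperm i j * s1)%g.
have E2 : prow s2 z = prow (tperm i j) (prow s1 z).
  by apply/rowP => k; rewrite !mxE permM.
have Ps2 : Ps s2.
  rewrite /Ps eq_le Hs0 // andbT /Fz E2 -/(Fz s0) -Ps1 /Fz.
  apply: F_swap => //; have hA : 0 <= prow s1 z ord0 j - prow s1 z ord0 i by rewrite subr_ge0 ltW.
  have hB : y ord0 j - y ord0 i <= 0 by rewrite subr_le0; apply: Dy; exact: ltnW.
  exact: mulr_ge0_le0.
have := Hs1 s2 Ps2.
rewrite /Psi E2 /=.
rewrite (eq_bigr (fun k : 'I_n => - (k : nat)%:R * (prow s1 z) ord0 (tperm i j k))); last first.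
  by move=> k _; rewrite !mxE.
rewrite (sum_tperm i j (fun k l => - (k : nat)%:R * (prow s1 z) ord0 l) nij).
set S := \sum_(k < n) _.
have hij : (i : nat)%:R < (j : nat)%:R :> R by rewrite ltr_nat.
move: lt hij; set a := prow s1 z ord0 i; set b := prow s1 z ord0 j; set ci := (i : nat)%:R; set cj := (j : nat)%:R.
move=> hab hc; apply/negP; rewrite -ltNge.
have : 0 < (cj - ci) * (b - a) by rewrite mulr_gt0 // subr_gt0.
lra.
Qed.

Lemma sq_v rho y u : sqnorm (u - (y - rho *: wvec R n)) =
  sqnorm (u - y) + 2%:R * rho * lin u +
  \sum_(k < n) (rho ^+ 2 * (wvec R n ord0 k) ^+ 2 - 2%:R * rho * wvec R n ord0 k * y ord0 k).
Proof.
rewrite /sqnorm /lin mulr_sumr -!big_split /=; apply: eq_bigr => k _.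
rewrite !mxE; ring.
Qed.

End Proof.

Theorem proposition2p2 (R : realFieldType) (n : nat) (rho : R) (y : 'rV[R]_n) :
  0 < rho -> inD y ->
  forall x : 'rV[R]_n, is_S rho y x <-> is_proj_D (y - rho *: wvec R n) x.
Proof.
move=> rho0 Dy x; have rho0' : 0 <= rho by exact: ltW.
split.
  move=> Hx; have Dx := @min_inD _ _ rho y x rho0' Dy Hx.
  split => // z Dz; rewrite !sq_v; have := Hx z.
  rewrite !Fdef !pen_D //; lra.
move=> [Dx Hp] z.
have [z' [Dz' Hz']] := @sort_ex _ _ rho y z rho0' Dy.
apply: le_trans Hz'.
have := Hp z' Dz'; rewrite !sq_v !Fdef !pen_D //; lra.
Qed.
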